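(* Let $p$ be a prime and let $G_1,\ldots,G_n$ be finite groups. Then \[ 1-\chi\big(\mathcal F^*_{\prod_{i=1}^nG_i}\big)=\prod_{i=1}^n\big(1-\chi(\mathcal F^*_{G_i})\big). \]
   Context: For a finite group $X$, $\mathcal F^*_X$ is the category whose objects are the nonidentity $p$-subgroups of $X$ and whose morphism sets are $\mathcal F^*_X(H,K)=C_X(H)\backslash N_X(H,K)$, where $N_X(H,K)=\{g\in X: g^{-1}Hg\le K\}$, with composition induced by multiplication in $X$. Leinster Euler characteristic: for a finite category $\mathcal C$ let $\zeta(a,b)=|\mathcal C(a,b)|$; a weighting is $k^\bullet:\mathrm{Ob}(\mathcal C)\to\mathbb Q$ with $\sum_b\zeta(a,b)k^b=1$ for all $a$, a coweighting is $k_\bullet$ with $\sum_ak_a\zeta(a,b)=1$ for all $b$; if both exist, $\chi(\mathcal C)=\sum_bk^b=\sum_ak_a$. *)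

(* Defs.v *)
From HB Require Import structures.
From mathcomp Require Import all_boot all_order all_algebra all_fingroup all_solvable.
Set Implicit Arguments. Unset Strict Implicit. Unset Printing Implicit Defensive.
Import GRing.Theory.
Local Open Scope group_scope.

Definition Fstar_obj (p : nat) (gT : finGroupType) (X : {set gT})
  : {set {group gT}} :=
  [set H : {group gT} | [&& H \subset X, p.-group H & H != 1 :> {set gT}]].

(* N_X(H,K) = { g in X : g^-1 H g <= K }   (H :^ g = g^-1 H g in mathcomp) *)
Definition transporter (gT : finGroupType) (X H K : {set gT}) : {set gT} :=
  [set g in X | H :^ g \subset K].

(* F*_X(H,K) = C_X(H) \ N_X(H,K) : the orbits C_X(H) g, g in N_X(H,K). *)
Definition Fstar_hom (gT : finGroupType) (X H K : {set gT})
  : {set {set gT}} :=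
  rcosets 'C_X(H) (transporter X H K).

Definition Fstar_zeta (gT : finGroupType) (X H K : {set gT}) : nat :=
  #|Fstar_hom X H K|.

(* A finite category given by its finite object set Ob (a finite set of
   elements of a finType O) and the cardinalities zeta a b = |C(a,b)|. *)

Definition is_weighting (O : finType) (Ob : {set O}) (zeta : O -> O -> nat)
  (k : O -> rat) : Prop :=
  forall a, a \in Ob -> (\sum_(b in Ob) (zeta a b)%:R * k b = 1)%R.

Definition is_coweighting (O : finType) (Ob : {set O}) (zeta : O -> O -> nat)
  (k : O -> rat) : Prop :=
  forall b, b \in Ob -> (\sum_(a in Ob) k a * (zeta a b)%:R = 1)%R.

Definition euler_char (O : finType) (Ob : {set O}) (zeta : O -> O -> nat)
  (x : rat) : Prop :=
  exists (kw kc : O -> rat),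
    [/\ is_weighting Ob zeta kw, is_coweighting Ob zeta kc,
        x = (\sum_(b in Ob) kw b)%R & x = (\sum_(a in Ob) kc a)%R].

Definition Fstar_euler_char (p : nat) (gT : finGroupType) (X : {set gT})
  (x : rat) : Prop :=
  euler_char (Fstar_obj p X) (fun H K : {group gT} => Fstar_zeta X H K) x.

(* prodT gT n = (...((1 * gT 0) * gT 1) ... * gT (n-1)),
   with the trivial group {perm void} as the empty product. *)
Fixpoint prodT (gT : nat -> finGroupType) (n : nat) : finGroupType :=
  match n with
  | 0 => {perm void}
  | m.+1 => (prodT gT m * gT m)%type
  end.

Fixpoint prodG (gT : nat -> finGroupType) (G : forall i, {group gT i}) (n : nat)
  : {group prodT gT n} :=
  match n return {group prodT gT n} with
  | 0 => [1 {perm void}]%G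
  | m.+1 => setX_group (prodG G m) (G m)
  end.

(* Main.v *)
Require Import Defs.
From HB Require Import structures.
From mathcomp Require Import all_boot all_order all_algebra all_fingroup all_solvable.
From mathcomp Require Import ring.
Import GRing.Theory Num.Theory.
Set Implicit Arguments. Unset Strict Implicit. Unset Printing Implicit Defensive.
Local Open Scope group_scope.
Local Open Scope ring_scope.


Definition Psub (p : nat) (gT : finGroupType) (X : {set gT}) : {set {group gT}} :=
  [set H : {group gT} | (H \subset X) && p.-group H].
Definition fC (gT : finGroupType) (X : {set gT}) (H : {group gT}) : rat :=
  #|'C_X(H)|%:R / #|X|%:R.

Lemma solve_gen (O : finType) (le : rel O) (r : O -> nat) (f : O -> rat) :
  (forall x, le x x) -> (forall x y, le x y -> x != y -> (r x < r y)%N) ->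
  forall S : {set O}, exists k : O -> rat,
    forall x, x \in S -> \sum_(y in S | le x y) k y = f x.
Proof.
move=> lexx ltr S.
elim: {S}_.+1 {-2}S (ltnSn #|S|) => // n IH S.
case: (set_0Vmem S) => [-> _|[x0 x0S] leS].
  by exists (fun _ => 0) => x; rewrite inE.
case: (arg_minnP r x0S) => m mS mmin.
have mS' : m \in S := mS. have ltS : (#|S :\ m| < n)%N.
  by rewrite (cardsD1 m S) mS' add1n ltnS in leS.
have [k Hk] := IH _ ltS.
exists (fun y => if y == m then f m - \sum_(z in S :\ m | le m z) k z else k y).
move=> x xS.
case: (eqVneq x m) => [->|xm].
  rewrite (bigD1 m) /= ?mS' ?lexx //= eqxx.
  rewrite [X in _ + X](_ : _ = \sum_(y in S :\ m | le m y) k y) ?subrK //.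
  apply: eq_big => [y|y /andP[_ /negPf ->]] //.
  by rewrite in_setD1 andbC andbA andbAC.
rewrite -(Hk x); last by rewrite in_setD1 xm.
have HP : forall y, (y \in S) && le x y = (y \in S :\ m) && le x y.
  move=> y; rewrite in_setD1; case: (eqVneq y m) => [->|//].
  rewrite mS' /=; apply/negbTE/negP => lexm.
  by have := mmin x xS; rewrite leqNgt ltr.
rewrite (eq_bigl _ _ HP); apply: eq_bigr => y /andP[].
by rewrite in_setD1 => /andP[/negPf -> _].
Qed.

Section S.
Variables (p : nat) (gT : finGroupType).
Implicit Types X H K : {group gT}.

Lemma grp_neq1 H : (H != 1%G) = (gval H != 1%g).
Proof. by []. Qed.

Lemma transporter_mul X H K : ('C_X(H) * transporter X H K)%g = transporter X H K.
Proof.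
apply/setP => g; apply/idP/idP.
  case/mulsgP => c h /setIP[cX cC]; rewrite !inE => /andP[hX sub] ->.
  rewrite groupM //= conjsgM.
  have -> : H :^ c = H by apply/normP; apply: (subsetP (cent_sub H)).
  by [].
by move=> gT'; apply/mulsgP; exists 1%g g; rewrite ?group1 ?mul1g.
Qed.

Lemma rcosets_partition_mulS (A : {set gT}) H : partition (rcosets H A) (H * A)%g.
Proof.
set HG := (H * A)%g; have sGHG: {subset A <= HG} by apply/subsetP/mulG_subr.
have defHx x: x \in HG -> [set y in HG | rcoset H x == rcoset H y] = H :* x.
  move=> HGx; apply/setP=> y; rewrite inE !rcosetE (sameP eqP rcoset_eqP).
  by rewrite rcoset_sym; apply/andb_idl/subsetP; rewrite mulGS sub1set.
have:= preim_partitionP (rcoset H) HG; congr (partition _ _); apply/setP=> Hx.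
apply/imsetP/idP=> [[x HGx ->] | ]; first by rewrite defHx // mem_rcosets.
by case/rcosetsP=> x /sGHG-HGx ->; exists x; rewrite ?defHx.
Qed.

Lemma zeta_card X H K :
  (Fstar_zeta X H K * #|'C_X(H)|)%N = #|transporter X H K|.
Proof.
rewrite /Fstar_zeta /Fstar_hom.
rewrite -[in RHS](transporter_mul X H K).
rewrite (@card_uniform_partition _ #|'C_X(H)| _ _ _ (rcosets_partition_mulS _ _)) //.
by move=> _ /rcosetsP[x Hx ->]; rewrite card_rcoset.
Qed.


Lemma trans_sum X H K :
  #|transporter X H K|%:R = \sum_(g in X) ((H :^ g \subset K) : nat)%:R :> rat.
Proof.
rewrite -sum1_card natr_sum [LHS]big_mkcond [RHS]big_mkcond /=.
apply: eq_bigr => g _; rewrite inE.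
by case: (g \in X); case: (H :^ g \subset K).
Qed.

Lemma exists_sol X : exists k : {group gT} -> rat,
  forall H, H \in Psub p X -> \sum_(K in Psub p X | H \subset K) k K = fC X H.
Proof.
apply: (@solve_gen _ (fun H K : {group gT} => H \subset K) (fun H => #|H|)).
  by move=> H; apply: subxx.
move=> H K /= sHK nHK; apply: proper_card; rewrite properEneq sHK andbT.
by apply: contra nHK => /eqP e; apply/eqP/val_inj.
Qed.

Lemma exists_cosol X (v : rat) : exists c : {group gT} -> rat,
  forall L, L \in Fstar_obj p X -> \sum_(H in Fstar_obj p X | H \subset L) c H = v.
Proof.
apply: (@solve_gen _ (fun L H : {group gT} => H \subset L) (fun H => #|gT| - #|H|)%N).
  by move=> H; apply: subxx.
move=> L H /= sHL nHL.
have lt : (#|H| < #|L|)%N.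
  apply: proper_card; rewrite properEneq sHL andbT.
  by apply: contra nHL => /eqP e; apply/eqP/val_inj.
apply: ltn_sub2l => //; apply: leq_trans lt (max_card _).
Qed.

Lemma fC_conj X H g : g \in X -> fC X (H :^ g)%G = fC X H.
Proof.
move=> gX; rewrite /fC /= centJ -{1}(conjGid gX) -conjIg cardJg //.
Qed.

Lemma obP X H : (H \in Fstar_obj p X) = (H \in Psub p X) && (H != 1%G).
Proof. by rewrite !inE andbA. Qed.

Lemma conj_ne1 H g : (H :^ g != 1%g) = (gval H != 1%g).
Proof. by rewrite -!subG1 sub_conjg conjs1g. Qed.

Lemma sol_euler X k :
  (forall H, H \in Psub p X -> \sum_(K in Psub p X | H \subset K) k K = fC X H) ->
  Fstar_euler_char p X (1 - k 1%G).
Proof.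
move=> Hk.
have [c Hc] := exists_cosol X (#|X|%:R^-1).
have Xn0 : #|X|%:R != 0 :> rat by rewrite pnatr_eq0 -lt0n cardG_gt0.
have Cn0 : forall H, #|'C_X(H)|%:R != 0 :> rat.
  by move=> H; rewrite pnatr_eq0 -lt0n cardG_gt0.
have zetaR : forall H K, (Fstar_zeta X H K)%:R = #|transporter X H K|%:R / #|'C_X(H)|%:R :> rat.
  by move=> H K; rewrite -zeta_card natrM mulfK.
set Ob := Fstar_obj p X.
have W : forall H, H \in Ob -> \sum_(K in Ob) (Fstar_zeta X H K)%:R * k K = 1.
  move=> H HOb.
  apply: (mulIf (Cn0 H)); rewrite mul1r big_distrl /=.
  transitivity (\sum_(K in Ob) \sum_(g in X) ((H :^ g \subset K) : nat)%:R * k K).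
    apply: eq_bigr => K _; rewrite zetaR mulrAC mulfVK // trans_sum big_distrl //.
  rewrite exchange_big /=.
  transitivity (\sum_(g in X) fC X H).
    apply: eq_bigr => g gX; rewrite -(fC_conj H gX) -Hk; last first.
      move: HOb; rewrite !inE => /and3P[sHX pH _].
      by rewrite -(conjGid gX) conjSg sHX pgroupJ.
    rewrite big_mkcond [RHS]big_mkcond /=; apply: eq_bigr => K _.
    rewrite obP; case: (K \in Psub p X) => /=; last by case: (K != 1%G); rewrite ?mul0r.
    case sHK: (H :^ g \subset K); last by rewrite mul0r; case: ifP.
    rewrite mul1r; case: eqP => [eK|] //=.
    move: HOb; rewrite obP => /andP[_]; rewrite grp_neq1 -(conj_ne1 H g).
    by rewrite eK in sHK; rewrite -subG1 sHK.
  by rewrite sumr_const /fC -[_ *+ #|X|]mulr_natr mulfVK.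
set kc := fun H : {group gT} => c H * #|'C_X(H)|%:R.
have CW : forall K, K \in Ob -> \sum_(H in Ob) kc H * (Fstar_zeta X H K)%:R = 1.
  move=> K KOb.
  transitivity (\sum_(H in Ob) \sum_(g in X) ((H :^ g \subset K) : nat)%:R * c H).
    apply: eq_bigr => H _; rewrite /kc zetaR.
    have -> : c H * #|'C_X(H)|%:R * (#|transporter X H K|%:R / #|'C_X(H)|%:R)
       = #|transporter X H K|%:R * c H by field; apply: Cn0.
    by rewrite trans_sum big_distrl.
  rewrite exchange_big /=.
  transitivity (\sum_(g in X) (#|X|%:R)^-1 : rat).
    apply: eq_bigr => g gX; rewrite -(Hc (K :^ g^-1)%G); last first.
      move: KOb; rewrite !inE => /and3P[sKX pK nK].
      rewrite -(conjGid (groupVr gX)) conjSg sKX pgroupJ /=.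
      by rewrite pK conj_ne1.
    rewrite big_mkcond [RHS]big_mkcond /=; apply: eq_bigr => H _.
    rewrite sub_conjg; case: (H \in Ob); last by [].
    by case: (H \subset K :^ g^-1); rewrite ?mul1r ?mul0r.
  by rewrite sumr_const -[_ *+ #|X|]mulr_natr mulVf.
have S1 : \sum_(b in Ob) k b = 1 - k 1%G.
  have := Hk 1%G; rewrite (bigD1 1%G) /=; last by rewrite inE sub1G pgroup1 subxx.
  rewrite /fC cent1T setIT divff // => /(_ _)/eqP.
  rewrite inE sub1G pgroup1 => /(_ isT) /eqP E.
  have -> : \sum_(b in Ob) k b = \sum_(i | (i \in Psub p X) && (1%G \subset i) && (i != 1%G)) k i.
    by apply: eq_bigl => K; rewrite obP sub1G andbT.
  by apply/eqP; rewrite eq_sym subr_eq addrC E.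
exists k, kc; split => //; rewrite -S1 //; symmetry.
transitivity (\sum_(a in Ob) kc a * \sum_(b in Ob) (Fstar_zeta X a b)%:R * k b).
  by apply: eq_bigr => a /W ->; rewrite mulr1.
under eq_bigr do rewrite big_distrr /=.
rewrite exchange_big /=; apply: eq_bigr => b bOb.
under eq_bigr do rewrite mulrA.
by rewrite -big_distrl /= CW // mul1r.
Qed.

End S.


Definition is_sol p (gT : finGroupType) (X : {group gT}) (k : {group gT} -> rat) :=
  forall H, H \in Psub p X -> \sum_(K in Psub p X | H \subset K) k K = fC X H.

Lemma sum_ind (T : finType) (P : pred T) (x0 : T) (c : T -> rat) :
  \sum_(x | P x) (x == x0)%:R * c x = (P x0)%:R * c x0.
Proof.
case Px0: (P x0).
  rewrite (bigD1 x0) //= eqxx mul1r big1 ?addr0 ?mul1r // => x /andP[_ /negPf ->].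
  by rewrite mul0r.
rewrite mul0r big1 // => x Px.
have /negPf -> : x != x0 by apply: contraTneq Px => ->; rewrite Px0.
by rewrite mul0r.
Qed.

Section Prod.
Variables (p : nat) (g1 g2 : finGroupType) (A : {group g1}) (B : {group g2}).

Definition P1 (H : {group (g1 * g2)%type}) : {group g1} := (fst_morphism g1 g2 @* H)%G.
Definition P2 (H : {group (g1 * g2)%type}) : {group g2} := (snd_morphism g1 g2 @* H)%G.

Lemma subX (H : {group (g1 * g2)%type}) (E : {set g1}) (F : {set g2}) :
  (H \subset setX E F) = (P1 H \subset E) && (P2 H \subset F).
Proof.
apply/idP/andP => [sH|[s1 s2]].
  split; apply/subsetP => y /morphimP[x _ xH ->];
  by have := subsetP sH x xH; rewrite inE => /andP[].
apply/subsetP => x xH; rewrite inE.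
rewrite (subsetP s1) ?(subsetP s2) //.
  by apply: (mem_morphim (snd_morphism g1 g2)) => //; rewrite inE.
by apply: (mem_morphim (fst_morphism g1 g2)) => //; rewrite inE.
Qed.

Lemma centX (H : {group (g1 * g2)%type}) :
  'C_(setX A B)(H) = setX 'C_A(P1 H) 'C_B(P2 H).
Proof.
apply/setP => -[a b].
have cP : ((a, b) \in 'C(H)) = (a \in 'C(P1 H)) && (b \in 'C(P2 H)).
  apply/centP/andP => [cH|[/centP c1 /centP c2]].
    split; apply/centP => y /morphimP[x _ xH ->].
      by have := cH x xH => /(congr1 fst).
    by have := cH x xH => /(congr1 snd).
  move=> [x1 x2] xH.
  have e1 : commute a x1.
    by apply: c1; apply: (mem_morphim (fst_morphism g1 g2) _ xH); rewrite inE.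
  have e2 : commute b x2.
    by apply: c2; apply: (mem_morphim (snd_morphism g1 g2) _ xH); rewrite inE.
  by change (((a * x1)%g, (b * x2)%g) = ((x1 * a)%g, (x2 * b)%g)); rewrite e1 e2.
rewrite !inE cP /=.
by case: (a \in A); case: (b \in B); case: (a \in _); case: (b \in _).
Qed.

Lemma sum_indc (T : finType) (P : pred T) (x0 : T) (c : rat) :
  \sum_(x | P x) (x == x0)%:R * c = (P x0)%:R * c.
Proof. exact: (@sum_ind T P x0 (fun _ => c)). Qed.

Lemma one_eqX (E : {group g1}) (F : {group g2}) :
  (1%G == setX_group E F) = (E == 1%G) && (F == 1%G).
Proof.
change (((1%g : {set (g1 * g2)%type}) == setX E F) = (gval E == 1%g) && (gval F == 1%g)).
rewrite eqEcard sub1G /= cards1 cardsX !trivg_card1.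
move: (cardG_gt0 E) (cardG_gt0 F).
by case: #|E| => [|[|m]] //; case: #|F| => [|[|n]] //; rewrite ?muln1 ?mul1n.
Qed.

Lemma sol_prod kA kB : is_sol p A kA -> is_sol p B kB ->
  exists k, is_sol p (setX_group A B) k /\ k 1%G = kA 1%G * kB 1%G.
Proof.
move=> hA hB.
exists (fun K => \sum_(E in Psub p A) \sum_(F in Psub p B)
          (K == setX_group E F)%:R * (kA E * kB F)).
split; last first.
  transitivity (\sum_(E in Psub p A) (E == 1%G)%:R *
                 (kA E * \sum_(F in Psub p B) (F == 1%G)%:R * kB F)).
    apply: eq_bigr => E _; rewrite !big_distrr; apply: eq_bigr => F _ /=.
    by rewrite one_eqX; case: (E == 1%G); case: (F == 1%G); rewrite /=; ring.
  rewrite (sum_ind _ 1%G kB).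
  rewrite (sum_ind _ 1%G (fun E => kA E * _)).
  by rewrite !inE !sub1G !pgroup1 /= !mul1r.
move=> H HP.
have := HP; rewrite inE => /andP[sH pH].
have := sH; rewrite subX => /andP[s1 s2].
have P1in : P1 H \in Psub p A by rewrite inE s1 morphim_pgroup.
have P2in : P2 H \in Psub p B by rewrite inE s2 morphim_pgroup.
rewrite exchange_big /=; under eq_bigr do rewrite exchange_big /=.
under eq_bigr do under eq_bigr do rewrite sum_indc.
have -> : fC (setX_group A B) H = fC A (P1 H) * fC B (P2 H).
  rewrite /fC /= centX !cardsX !natrM; field.
  by rewrite !pnatr_eq0 -!lt0n !cardG_gt0.
rewrite -(hA _ P1in) -(hB _ P2in) big_mkcondr big_distrl /=.
apply: eq_bigr => E EA; rewrite big_mkcondr big_distrr /=.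
apply: eq_bigr => F FB.
have -> : setX_group E F \in Psub p (setX_group A B).
  move: EA FB; rewrite !inE => /andP[sE pE] /andP[sF pF].
  apply/andP; split; first exact: setXS.
  by rewrite /pgroup cardsX pnatM; apply/andP.
rewrite subX /=.
by case: (P1 H \subset E); case: (P2 H \subset F); rewrite /= ?mul1r ?mul0r ?mulr0.
Qed.

End Prod.


Lemma sol_base p (gT : finGroupType) :
  is_sol p [1 gT]%G (fun K => (K == 1%G)%:R * 1).
Proof.
move=> H HP; rewrite (sum_ind _ 1%G (fun _ => 1)).
move: HP; rewrite !inE => /andP[sH _].
rewrite sub1G pgroup1 sH /fC /= (setIidPl (sub1G _)) cards1.
by [].
Qed.

Lemma main_aux (p : nat) (gT : nat -> finGroupType)
    (G : forall i, {group gT i}) (n : nat) :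
  prime p ->
  exists (x : nat -> rat) (y : rat),
    [/\ forall i, (i < n)%N -> Fstar_euler_char p (G i) (x i),
        Fstar_euler_char p (prodG G n) y
      & (1 - y = \prod_(i < n) (1 - x i))%R].
Proof.
move=> _.
suff [x [y [k [h1 h2 hy h4]]]] : exists x y k, [/\ forall i, (i < n)%N -> Fstar_euler_char p (G i) (x i),
    is_sol p (prodG G n) k, y = 1 - k 1%G & 1 - y = \prod_(i < n) (1 - x i)].
  by exists x, y; split => //; rewrite hy; apply: sol_euler.
elim: n => [|m [x [y [k [h1 h2 hy h4]]]]].
  exists (fun _ => 0), (1 - ((1%G == 1%G :> {group prodT gT 0})%:R * 1)),
    (fun K => (K == 1%G)%:R * 1); split => //.
    exact: sol_base.
  by rewrite big_ord0 eqxx mul1r subrr subr0.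
have [kB hB] := exists_sol p (G m).
have [k' [hk' e]] := sol_prod h2 hB.
exists (fun i => if i == m then 1 - kB 1%G else x i), (1 - k' 1%G), k'.
split => //.
- move=> i; rewrite ltnS leq_eqVlt => /orP[/eqP->|lt].
    by rewrite eqxx; apply: sol_euler.
  by rewrite (ltn_eqF lt); apply: h1.
rewrite big_ord_recr /= eqxx.
rewrite (eq_bigr (fun i : 'I_m => 1 - x i)); last first.
  by move=> i _; rewrite (ltn_eqF (ltn_ord i)).
rewrite -h4 hy e; ring.
Qed.

Local Close Scope ring_scope.
Local Close Scope group_scope.

Theorem theorem6p2 (p : nat) (gT : nat -> finGroupType)
    (G : forall i, {group gT i}) (n : nat) :
  prime p ->
  exists (x : nat -> rat) (y : rat),
    [/\ forall i, i < n -> Fstar_euler_char p (G i) (x i),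
        Fstar_euler_char p (prodG G n) y
      & (1 - y = \prod_(i < n) (1 - x i))%R].
Proof. exact: main_aux. Qed.
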